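(* Let $(X,d)$ be a compact metric space, $T:X\to X$ continuous, $Z\subset X$ non-empty, and $\Phi=\{\varphi_n:X\to\mathbb{R}\}_{n\in\mathbb{N}}$ a sequence of continuous functions satisfying the tempered distortion condition $\lim_{\varepsilon\to 0}\limsup_{n\to\infty}\varphi_n(\varepsilon)/n=0$, where $\varphi_n(\varepsilon)=\sup\{|\varphi_n(x)-\varphi_n(y)|: x\in X,\ y\in B_n(x,e^{-n\varepsilon})\}$. Then $$P^{\tilde B}_Z(T,\Phi)=\lim_{\varepsilon\to0}\tilde M_\varepsilon(Z,\Phi).$$
   Context: The neutralized Bowen ball is $B_n(x,e^{-n\varepsilon})=\{y\in X: d(T^jx,T^jy)<e^{-n\varepsilon}\ \forall\,0\le j\le n-1\}$. For $\varepsilon>0$, $N\in\mathbb{N}$, $s\in\mathbb{R}$, let $M^s_{N,\varepsilon}(Z,\Phi)=\inf\sum_{i\in I}\exp[-n_is+\sup_{y\in B_{n_i}(x_i,e^{-n_i\varepsilon})}\varphi_{n_i}(y)]$, the infimum over all finite or countable covers $\{B_{n_i}(x_i,e^{-n_i\varepsilon})\}_{i\in I}$ of $Z$ with $n_i\ge N$, $x_i\in X$; $M^s_\varepsilon=\lim_{N\to\infty}M^s_{N,\varepsilon}$; $M_\varepsilon(Z,\Phi)=\inf\{s:M^s_\varepsilon(Z,\Phi)=0\}=\sup\{s:M^s_\varepsilon(Z,\Phi)=\infty\}$; $P^{\tilde B}_Z(T,\Phi)=\lim_{\varepsilon\to0}M_\varepsilon(Z,\Phi)$. The quantities $\tilde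 M^s_{N,\varepsilon}(Z,\Phi)$, $\tilde M^s_\varepsilon(Z,\Phi)$, $\tilde M_\varepsilon(Z,\Phi)$ are defined in exactly the same way except that, in the sum, $\sup_{y\in B_{n_i}(x_i,e^{-n_i\varepsilon})}\varphi_{n_i}(y)$ is replaced by $\varphi_{n_i}(z_i)$ for a point $z_i\in B_{n_i}(x_i,e^{-n_i\varepsilon})$ chosen in each ball of the cover. *)

(* Defs.v *)
From HB Require Import structures.
From mathcomp Require Import all_boot all_order all_algebra.
From mathcomp Require Import all_classical all_reals all_analysis.
Set Implicit Arguments. Unset Strict Implicit. Unset Printing Implicit Defensive.
Import Order.TTheory GRing.Theory Num.Theory.
Import numFieldNormedType.Exports.
Local Open Scope classical_set_scope.
Local Open Scope ring_scope.

Section NeutralizedBowen.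
Variables (R : realType) (X : metricType R) (T : X -> X).

Definition bowen_ball (n : nat) (x : X) (r : R) : set X :=
  [set y | forall j : nat, (j < n)%N -> mdist (iter j T x) (iter j T y) < r].

Definition nball (n : nat) (x : X) (eps : R) : set X :=
  bowen_ball n x (expR (- (n%:R * eps))).

Variable phi : nat -> X -> R.

Definition distortion (n : nat) (eps : R) : R :=
  sup [set r | exists x y, nball n x eps y /\ r = `|phi n x - phi n y|].

Definition tempered_distortion : Prop :=
  limn_esup (fun n => ((distortion n eps) / n%:R)%:E)
    @[eps --> 0^'+] --> 0%E.

Definition is_cover (Z : set X) (N : nat) (eps : R)
    (I : set nat) (n : nat -> nat) (x : nat -> X) : Prop :=
  (forall i, I i -> (N <= n i)%N) /\
  Z `<=` \bigcup_(i in I) nball (n i) (x i) eps.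

Definition M_N (Z : set X) (s : R) (N : nat) (eps : R) : \bar R :=
  ereal_inf [set v | exists I n x, is_cover Z N eps I n x /\
     v = \esum_(i in I)
           (expR (- ((n i)%:R * s) + sup (phi (n i) @` nball (n i) (x i) eps)))%:E].

Definition tM_N (Z : set X) (s : R) (N : nat) (eps : R) : \bar R :=
  ereal_inf [set v | exists I n x z, is_cover Z N eps I n x /\
     (forall i, I i -> nball (n i) (x i) eps (z i)) /\
     v = \esum_(i in I) (expR (- ((n i)%:R * s) + phi (n i) (z i)))%:E].

Definition M_s (Z : set X) (s eps : R) : \bar R := lim (M_N Z s N eps @[N --> \oo]).
Definition tM_s (Z : set X) (s eps : R) : \bar R := lim (tM_N Z s N eps @[N --> \oo]).

Definition M_eps (Z : set X) (eps : R) : \bar R :=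
  ereal_inf [set s%:E | s in [set s : R | M_s Z s eps = 0%E]].
Definition tM_eps (Z : set X) (eps : R) : \bar R :=
  ereal_inf [set s%:E | s in [set s : R | tM_s Z s eps = 0%E]].

Definition P_tildeB (Z : set X) : \bar R := lim (M_eps Z eps @[eps --> 0^'+]).

End NeutralizedBowen.

(* Main.v *)
Require Import Defs.
From HB Require Import structures.
From mathcomp Require Import all_boot all_order all_algebra.
From mathcomp Require Import all_classical all_reals all_analysis.
From mathcomp Require Import lra.
Import Order.TTheory GRing.Theory Num.Theory.
Import numFieldNormedType.Exports.
Local Open Scope classical_set_scope.
Local Open Scope ring_scope.
Set Implicit Arguments. Unset Strict Implicit.
Section Cov.
Variables (R : realType) (X : metricType R) (T : X -> X) (phi : nat -> X -> R).
Hypothesis phib : forall n, exists B : R, forall x, `|phi n x| <= B.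

Lemma nball_center n x eps : nball T n x eps x.
Proof. by move=> j _; rewrite mdistxx expR_gt0. Qed.

Lemma nball_mono n x eps eps' : eps' <= eps ->
  nball T n x eps `<=` nball T n x eps'.
Proof.
move=> le y H j jn; apply: (lt_le_trans (H j jn)); rewrite ler_expR lerN2.
by rewrite ler_wpM2l.
Qed.

Lemma has_sup_img n (A : set X) : A !=set0 -> has_sup (phi n @` A).
Proof.
case=> a Aa; split; first by exists (phi n a), a.
have [B HB] := phib n; exists B => _ [y _ <-].
exact: le_trans (ler_norm _) (HB y).
Qed.

Lemma le_sup_ball n x eps y : nball T n x eps y ->
  phi n y <= sup (phi n @` nball T n x eps).
Proof.
move=> H; apply: sup_upper_bound; last by exists y.
by apply: has_sup_img; exists x; exact: nball_center.
Qed.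

Lemma le_distortion n x eps y : nball T n x eps y ->
  `|phi n x - phi n y| <= distortion T phi n eps.
Proof.
move=> H; apply: sup_upper_bound; last by exists x, y.
split; first by exists `|phi n x - phi n y|, x, y.
have [B HB] := phib n; exists (B + B) => _ [a [b [_ ->]]].
apply: le_trans (ler_normB _ _) _; exact: lerD.
Qed.

Lemma sup_ball_le n x eps :
  sup (phi n @` nball T n x eps) <= phi n x + distortion T phi n eps.
Proof.
apply: ge_sup; first by exists (phi n x), x => //; exact: nball_center.
move=> _ [y Hy <-].
have := le_distortion Hy; rewrite -lerBlDl => /(le_trans _); apply.
by rewrite -normrN opprB ler_norm.
Qed.

Lemma phi_ball_le n x eps z : nball T n x eps z ->
  phi n x <= phi n z + distortion T phi n eps.
Proof.
move=> Hz; have := le_distortion Hz; rewrite -lerBlDl => /(le_trans _); apply.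
exact: ler_norm.
Qed.


Local Open Scope ereal_scope.

Lemma MN_ge0 Z s N eps : 0 <= M_N T phi Z s N eps.
Proof.
apply: le_ereal_inf_tmp => _ [I [n [x [_ ->]]]].
by apply: esum_ge0 => i _; rewrite lee_fin expR_ge0.
Qed.

Lemma tMN_ge0 Z s N eps : 0 <= tM_N T phi Z s N eps.
Proof.
apply: le_ereal_inf_tmp => _ [I [n [x [z [_ [_ ->]]]]]].
by apply: esum_ge0 => i _; rewrite lee_fin expR_ge0.
Qed.

Lemma MN_nd Z s eps : nondecreasing_seq (fun N => M_N T phi Z s N eps).
Proof.
move=> N N' NN'; apply: ereal_inf_le_tmp => _ [I [n [x [[cN cZ] ->]]]].
exists I, n, x; split => //; split => // i Ii; exact: leq_trans NN' (cN i Ii).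
Qed.

Lemma tMN_nd Z s eps : nondecreasing_seq (fun N => tM_N T phi Z s N eps).
Proof.
move=> N N' NN'; apply: ereal_inf_le_tmp => _ [I [n [x [z [[cN cZ] [zin ->]]]]]].
exists I, n, x, z; split => //; split => // i Ii; exact: leq_trans NN' (cN i Ii).
Qed.

Lemma tMN_le_MN Z s N eps : tM_N T phi Z s N eps <= M_N T phi Z s N eps.
Proof.
apply: le_ereal_inf_tmp => _ [I [n [x [cov ->]]]].
apply: ge_ereal_inf.
exists (\esum_(i in I) (expR (- ((n i)%:R * s) + phi (n i) (x i)))%:E).
  by exists I, n, x, x; split => //; split => // i _; exact: nball_center.
apply: le_esum => i _; rewrite lee_fin ler_expR lerD2l.
apply: le_sup_ball; exact: nball_center.
Qed.

Lemma MN_le_tMN Z s N eps eta N0 :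
  (forall m, (N0 <= m)%N -> (distortion T phi m eps <= m%:R * eta)%R) ->
  (N0 <= N)%N -> M_N T phi Z (s + eta + eta) N eps <= tM_N T phi Z s N eps.
Proof.
move=> HD NN0; apply: le_ereal_inf_tmp => _ [I [n [x [z [cov [zin ->]]]]]].
apply: ge_ereal_inf.
exists (\esum_(i in I) (expR (- ((n i)%:R * (s + eta + eta)) +
   sup (phi (n i) @` nball T (n i) (x i) eps)))%:E).
  by exists I, n, x.
apply: le_esum => i Ii; rewrite lee_fin ler_expR.
have h1 := sup_ball_le (n i) (x i) eps.
have h2 := phi_ball_le (zin i Ii).
have h3 := HD (n i) (leq_trans NN0 (cov.1 i Ii)).
rewrite !mulrDr; lra.
Qed.

Lemma MN_mono Z s N eps eps' eta N0 : (eps' <= eps)%R ->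
  (forall m, (N0 <= m)%N -> (distortion T phi m eps' <= m%:R * eta)%R) ->
  (N0 <= N)%N -> M_N T phi Z (s + eta) N eps' <= M_N T phi Z s N eps.
Proof.
move=> le HD NN0; apply: le_ereal_inf_tmp => _ [I [n [x [[cN cZ] ->]]]].
apply: ge_ereal_inf.
exists (\esum_(i in I) (expR (- ((n i)%:R * (s + eta)) +
   sup (phi (n i) @` nball T (n i) (x i) eps')))%:E).
  exists I, n, x; split => //; split => // w /cZ [i Ii Hi].
  by exists i => //; exact: nball_mono le _ Hi.
apply: le_esum => i Ii; rewrite lee_fin ler_expR.
have h1 := sup_ball_le (n i) (x i) eps'.
have h2 : (phi (n i) (x i) <= sup (phi (n i) @` nball T (n i) (x i) eps))%R.
  by apply: le_sup_ball; exact: nball_center.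
have h3 := HD (n i) (leq_trans NN0 (cN i Ii)).
rewrite !mulrDr; lra.
Qed.

Lemma Ms_ge0 Z s eps : 0 <= M_s T phi Z s eps.
Proof.
apply: lime_ge; first exact: ereal_nondecreasing_is_cvgn (MN_nd _ _ _).
by apply: nearW => N; exact: MN_ge0.
Qed.

Lemma tMs_ge0 Z s eps : 0 <= tM_s T phi Z s eps.
Proof.
apply: lime_ge; first exact: ereal_nondecreasing_is_cvgn (tMN_nd _ _ _).
by apply: nearW => N; exact: tMN_ge0.
Qed.

Lemma tMs_le_Ms Z s eps : tM_s T phi Z s eps <= M_s T phi Z s eps.
Proof.
apply: lee_lim; [exact: ereal_nondecreasing_is_cvgn (tMN_nd _ _ _)|
  exact: ereal_nondecreasing_is_cvgn (MN_nd _ _ _)|].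
by apply: nearW => N; exact: tMN_le_MN.
Qed.

Lemma Ms_le_tMs Z s eps eta N0 :
  (forall m, (N0 <= m)%N -> (distortion T phi m eps <= m%:R * eta)%R) ->
  M_s T phi Z (s + eta + eta) eps <= tM_s T phi Z s eps.
Proof.
move=> HD.
apply: lee_lim; [exact: ereal_nondecreasing_is_cvgn (MN_nd _ _ _)|
  exact: ereal_nondecreasing_is_cvgn (tMN_nd _ _ _)|].
near=> N; apply: (MN_le_tMN _ _ HD); near: N; exact: nbhs_infty_ge.
Unshelve. all: by end_near. Qed.

Lemma Ms_mono Z s eps eps' eta N0 : (eps' <= eps)%R ->
  (forall m, (N0 <= m)%N -> (distortion T phi m eps' <= m%:R * eta)%R) ->
  M_s T phi Z (s + eta) eps' <= M_s T phi Z s eps.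
Proof.
move=> le HD.
apply: lee_lim; [exact: ereal_nondecreasing_is_cvgn (MN_nd _ _ _)|
  exact: ereal_nondecreasing_is_cvgn (MN_nd _ _ _)|].
near=> N; apply: (MN_mono _ _ le HD); near: N; exact: nbhs_infty_ge.
Unshelve. all: by end_near. Qed.

Lemma tMeps_le_Meps Z eps : tM_eps T phi Z eps <= M_eps T phi Z eps.
Proof.
apply: ereal_inf_le_tmp => _ [s Hs <-]; exists s => //=.
by apply/le_anti; rewrite tMs_ge0 andbT -Hs tMs_le_Ms.
Qed.

Lemma Meps_le_tMeps Z eps eta N0 : (0 <= eta)%R ->
  (forall m, (N0 <= m)%N -> (distortion T phi m eps <= m%:R * eta)%R) ->
  M_eps T phi Z eps <= tM_eps T phi Z eps + (eta + eta)%:E.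
Proof.
move=> eta0 HD; rewrite -leeBlDr //.
apply: le_ereal_inf_tmp => _ [s Hs <-]; rewrite leeBlDr // -EFinD.
apply: ereal_inf_lbound; exists (s + (eta + eta))%R => //=.
apply/le_anti; rewrite Ms_ge0 andbT; rewrite /= in Hs; rewrite -Hs addrA.
exact: Ms_le_tMs HD.
Qed.

Lemma Meps_mono Z eps eps' eta N0 : (eps' <= eps)%R ->
  (forall m, (N0 <= m)%N -> (distortion T phi m eps' <= m%:R * eta)%R) ->
  M_eps T phi Z eps' <= M_eps T phi Z eps + eta%:E.
Proof.
move=> le HD; rewrite -leeBlDr //.
apply: le_ereal_inf_tmp => _ [s Hs <-]; rewrite leeBlDr // -EFinD.
apply: ereal_inf_lbound; exists (s + eta)%R; last by [].
apply/le_anti; rewrite Ms_ge0 andbT; rewrite /= in Hs; rewrite -Hs.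
exact: (Ms_mono Z s le HD).
Qed.

End Cov.
Local Open Scope ereal_scope.
Lemma squeeze_gen (R : realType) (h u : R -> \bar R) (L : \bar R) :
  u x @[x --> 0^'+] --> L ->
  (\forall e \near 0^'+, h e <= u e) ->
  (forall eta : R, (0 < eta)%R -> \forall e \near 0^'+, L - eta%:E <= h e) ->
  h x @[x --> 0^'+] --> L.
Proof.
move=> uL hu hL.
pose w := fun e : R => ereal_inf [set h t | t in [set t : R | (0 < t <= e)%R]].
have wh : forall e : R, (0 < e)%R -> w e <= h e.
  by move=> e e0; apply: ereal_inf_lbound; exists e => //=; apply/andP; split.
have wmon : forall a b : R, (0 < a)%R -> (a <= b)%R -> w b <= w a.
  move=> a b a0 ab; apply: ereal_inf_le_tmp => _ [t /andP[t0 ta] <-].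
  by exists t => //=; rewrite t0 (le_trans ta ab).
have wcvg : cvg (w x @[x --> 0^'+]).
  apply: nonincreasing_at_right_is_cvge; near=> b => x y.
  rewrite !in_itv /= => /andP[x0 _] /andP[_ _] xy; exact: wmon.
have Lle : L <= lim (w x @[x --> 0^'+]).
  apply/lee_addgt0Pr => eta eta0; rewrite -leeBlDr //.
  apply: lime_ge => //.
  case: (hL eta eta0) => d /= d0 Hd.
  near=> e; apply: le_ereal_inf_tmp => _ [t /andP[t0 te] <-].
  apply: Hd => //=; rewrite sub0r normrN gtr0_norm //.
  by apply: (le_lt_trans te); near: e; exact: nbhs_right_lt.
have leL : lim (w x @[x --> 0^'+]) <= L.
  rewrite -(cvg_lim _ uL) //; apply: lee_lim => //; first exact: cvgP uL.
  near=> e; apply: le_trans (wh e _) _; first by near: e; exact: nbhs_right_gt.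
  by near: e.
have wL : w x @[x --> 0^'+] --> L.
  by have := wcvg; rewrite (_ : lim _ = L) //; apply/eqP; rewrite eq_le Lle leL.
apply: (squeeze_cvge _ wL uL).
near=> e; rewrite wh /=; last by near: e; exact: nbhs_right_gt.
by near: e.
Unshelve. all: by end_near. Qed.

Lemma conv_main (R : realType) (f g : R -> \bar R) :
 (forall e : R, (0 < e)%R -> g e <= f e) ->
 (forall eta : R, (0 < eta)%R -> \forall e \near 0^'+, f e <= g e + eta%:E) ->
 (forall eta : R, (0 < eta)%R -> \forall e \near 0^'+,
     forall t : R, (0 < t <= e)%R -> f t <= f e + eta%:E) ->
 g x @[x --> 0^'+] --> lim (f x @[x --> 0^'+]).
Proof.
move=> H1 H2 H3.
pose u := fun e : R => ereal_sup [set f t | t in [set t : R | (0 < t <= e)%R]].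
have fu : forall e : R, (0 < e)%R -> f e <= u e.
  by move=> e e0; apply: ereal_sup_ubound; exists e => //=; apply/andP; split.
have umon : forall a b : R, (0 < a)%R -> (a <= b)%R -> u a <= u b.
  move=> a b a0 ab; apply: ereal_sup_le => _ [t /andP[t0 ta] <-].
  by exists t => //=; rewrite t0 (le_trans ta ab).
have ucvg : cvg (u x @[x --> 0^'+]).
  apply: nondecreasing_at_right_is_cvge; near=> b => x y.
  rewrite !in_itv /= => /andP[x0 _] /andP[_ _] xy; exact: umon.
set L := lim (u x @[x --> 0^'+]).
have uL : u x @[x --> 0^'+] --> L by exact: ucvg.
have Lu : forall s : R, (0 < s)%R -> L <= u s.
  move=> s s0; apply: lime_le => //; near=> e; apply: umon.
    by near: e; exact: nbhs_right_gt.
  by apply/ltW; near: e; exact: nbhs_right_lt.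
have Lf : forall eta : R, (0 < eta)%R -> \forall e \near 0^'+, L - eta%:E <= f e.
  move=> eta eta0; near=> e; rewrite leeBlDr //.
  have e0 : (0 < e)%R by near: e; exact: nbhs_right_gt.
  apply: le_trans (Lu e e0) _; apply: ge_ereal_sup => _ [t tI <-].
  by move: t tI; near: e; exact: H3.
have fL : f x @[x --> 0^'+] --> L.
  apply: (@squeeze_gen R f u L uL) => //.
  by near=> e; apply: fu; near: e; exact: nbhs_right_gt.
rewrite (cvg_lim _ fL) //.
apply: (@squeeze_gen R g u L uL) => //.
  near=> e; apply: le_trans (H1 e _) (fu e _); near: e; exact: nbhs_right_gt.
move=> eta eta0.
have eta20 : (0 < eta / 2)%R by rewrite divr_gt0.
near=> e; rewrite leeBlDr //.
have h1 : L - (eta / 2)%:E <= f e by near: e; exact: Lf.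
have h2 : f e <= g e + (eta / 2)%:E by near: e; exact: H2.
move: h1; rewrite leeBlDr // => h1.
apply: (le_trans h1); apply: (le_trans (leeD2r _ h2)).
by rewrite -addeA -EFinD -splitr.
Unshelve. all: by end_near. Qed.

Lemma near_right_down (R : realType) (P : R -> Prop) :
  (\forall e \near 0^'+, P e) ->
  \forall e \near 0^'+, forall t, (0 < t <= e)%R -> P t.
Proof.
case=> d /= d0 Hd; exists d => // e /= He e0 t /andP[t0 te].
apply: Hd => //=; rewrite sub0r normrN gtr0_norm //.
move: He; rewrite sub0r normrN gtr0_norm //; exact: le_lt_trans.
Qed.

Lemma TD_bound (R : realType) (X : metricType R) (T : X -> X)
  (phi : nat -> X -> R) : tempered_distortion T phi ->
  forall eta : R, (0 < eta)%R -> \forall e \near 0^'+,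
    exists N0, forall m, (N0 <= m)%N -> (distortion T phi m e <= m%:R * eta)%R.
Proof.
move=> TD eta eta0.
have : \forall e \near 0^'+,
    limn_esup (fun n => ((distortion T phi n e) / n%:R)%:E) < eta%:E.
  have h : (0 < eta%:E) by rewrite lte_fin.
  exact: (TD _ (open_ereal_lt' h)).
apply: filterS => e /ereal_inf_lt [_ [V [N _ HV] <-] Hlt].
exists (maxn N 1) => m; rewrite geq_max => /andP[Nm m1].
have m0 : (0 < m%:R :> R)%R by rewrite ltr0n.
have : ((distortion T phi m e / m%:R)%:E < eta%:E).
  apply: le_lt_trans Hlt; apply: ereal_sup_ubound; exists m => //; exact: HV.
rewrite lte_fin ltr_pdivrMr // => H; rewrite mulrC; exact: ltW.
Qed.

Lemma phi_bounded (R : realType) (X : metricType R) (f : X -> R) :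
  compact [set: X] -> continuous f -> exists B : R, forall x, (`|f x| <= B)%R.
Proof.
move=> cX cf.
have cI : compact (f @` [set: X]).
  by apply: continuous_compact => //; exact: continuous_subspaceT.
have := compact_bounded cI; case=> M [_ HM].
exists (M + 1)%R => x; apply: (HM (M + 1)%R); first by rewrite ltrDl.
by exists x.
Qed.

Theorem mainTheorem2 (R : realType) (X : metricType R) (T : X -> X)
  (phi : nat -> X -> R) (Z : set X) :
  compact [set: X] ->
  continuous T ->
  (forall n, continuous (phi n)) ->
  Z !=set0 ->
  tempered_distortion T phi ->
  tM_eps T phi Z eps @[eps --> 0^'+] --> P_tildeB T phi Z.
Proof.
move=> cX _ cphi _ TD.
have phib : forall n, exists B : R, forall x, (`|phi n x| <= B)%R.
  by move=> n; exact: phi_bounded.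
apply: conv_main.
- by move=> e _; exact: tMeps_le_Meps.
- move=> eta eta0; have eta20 : (0 < eta / 2)%R by rewrite divr_gt0.
  apply: filterS (TD_bound TD eta20) => e [N0 HN0].
  rewrite [X in _ + X%:E]splitr; apply: (Meps_le_tMeps phib _ _ HN0).
  exact: ltW.
- move=> eta eta0.
  apply: filterS (near_right_down (TD_bound TD eta0)) => e He t /andP[t0 te].
  have [N0 HN0] : exists N0, forall m, (N0 <= m)%N -> (distortion T phi m t <= m%:R * eta)%R by apply: He; rewrite t0 te.
  exact: (Meps_mono phib Z te HN0).
Qed.
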